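(* Let $F$, $X_0$, $B$, $C$ be as in the context. Suppose $\dim\ker C=1$, let $T\subset\mathbb{R}^m$ be a linear subspace of codimension 1 with $T\cap\ker C=\{0\}$, and suppose $F(X)=0$ has a nonconstant analytic family of solutions $X(t)=\sum_{p=0}^\infty X_pt^p$ with initial term $X_0$. Then $F(X)=0$ admits a $T$-standard formal solution $Y(t)=\sum_{p=0}^\infty Y_pt^p$ with $Y_0=X_0$.
   Context: Let $m,n\ge 1$ and let $F=(F_1,\dots,F_n):\mathbb{R}^m\to\mathbb{R}^n$, where each component is a polynomial of degree at most 2 written as $F_k(X)=\sum_{i=1}^m\sum_{j=1}^m\alpha^k_{ij}x_ix_j+\sum_{i=1}^m\beta^k_ix_i+\gamma^k$ for $X=(x_1,\dots,x_m)$, with real coefficients and $\alpha^k_{ij}=\alpha^k_{ji}$. Fix $X_0\in\mathbb{R}^m$ with $F(X_0)=0$. Define the bilinear map $B:\mathbb{R}^m\times\mathbb{R}^m\to\mathbb{R}^n$ by $B(X,Y)_k=\sum_{i,j=1}^m\alpha^k_{ij}x_iy_j$, the linear map $A:\mathbb{R}^m\to\mathbb{R}^n$ by $(AX)_k=\sum_{i=1}^m\beta^k_ix_i$, and the linear map $C:\mathbb{R}^m\to\mathbb{R}^n$ by $CX=B(X_0,X)+B(X,X_0)+AX$. An analytic family of solutions with initial term $X_0$ is a power series $X(t)=\sum_{p=0}^\infty X_pt^p$ with $X_p\in\mathbb{R}^m$, positive radius of convergence, constant term equal to $X_0$, and $F(X(t))=0$ for all sufficiently small $t$; it is nonconstant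 if $X_p\neq 0$ for some $p\ge 1$. Given a codimension-1 subspace $T$ with $T\cap\ker C=\{0\}$, a $T$-standard formal solution to $F(X)=0$ is a formal power series $Y(t)=\sum_{p=0}^\infty Y_pt^p$ with $Y_p\in\mathbb{R}^m$ (no convergence required) such that: (1) $CY_q=-\sum_{p=1}^{q-1}B(Y_p,Y_{q-p})$ for every $q\ge 1$; (2) $Y_1\neq 0$; (3) $Y_p\in T$ for every $p\ge 2$. *)

(* Defs.v *)
From HB Require Import structures.
From mathcomp Require Import all_boot all_order all_algebra.
From mathcomp Require Import all_classical all_reals all_analysis.
From mathcomp Require Import Rstruct Rstruct_topology.
Notation R := Rdefinitions.R.
Set Implicit Arguments. Unset Strict Implicit. Unset Printing Implicit Defensive.
Import Order.TTheory GRing.Theory Num.Theory.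
Local Open Scope ring_scope.

(* Vectors of R^m are row vectors 'rV[R]_m; coordinate i of X is X ord0 i.
   Coefficients: alpha k i j, beta k i, gamma k (k : 'I_n, i j : 'I_m). *)

Definition Fmap (m n : nat) (alpha : 'I_n -> 'I_m -> 'I_m -> R)
  (beta : 'I_n -> 'I_m -> R) (gamma : 'I_n -> R) (X : 'rV[R]_m) : 'rV[R]_n :=
  \row_k (\sum_(i < m) \sum_(j < m) alpha k i j * X ord0 i * X ord0 j
          + \sum_(i < m) beta k i * X ord0 i + gamma k).

Definition Bmap (m n : nat) (alpha : 'I_n -> 'I_m -> 'I_m -> R)
  (X Y : 'rV[R]_m) : 'rV[R]_n :=
  \row_k (\sum_(i < m) \sum_(j < m) alpha k i j * X ord0 i * Y ord0 j).

Definition Amap (m n : nat) (beta : 'I_n -> 'I_m -> R) (X : 'rV[R]_m)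
  : 'rV[R]_n :=
  \row_k (\sum_(i < m) beta k i * X ord0 i).

Definition Cmap (m n : nat) (alpha : 'I_n -> 'I_m -> 'I_m -> R)
  (beta : 'I_n -> 'I_m -> R) (X0 X : 'rV[R]_m) : 'rV[R]_n :=
  Bmap alpha X0 X + Bmap alpha X X0 + Amap beta X.

Definition psum (m : nat) (Xs : nat -> 'rV[R]_m) (t : R) : 'rV[R]_m :=
  \row_i limn (series (fun p => Xs p ord0 i * t ^+ p)).

Definition analytic_family (m n : nat) (alpha : 'I_n -> 'I_m -> 'I_m -> R)
  (beta : 'I_n -> 'I_m -> R) (gamma : 'I_n -> R) (X0 : 'rV[R]_m)
  (Xs : nat -> 'rV[R]_m) : Prop :=
  Xs 0%N = X0 /\
  (exists r : R, 0 < r /\ forall t : R, `|t| < r ->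
      (forall i : 'I_m, cvgn (series (fun p => Xs p ord0 i * t ^+ p))) /\
      Fmap alpha beta gamma (psum Xs t) = 0).

Definition nonconstant (m : nat) (Xs : nat -> 'rV[R]_m) : Prop :=
  exists p : nat, (1 <= p)%N /\ Xs p != 0.

Definition T_standard (m n : nat) (alpha : 'I_n -> 'I_m -> 'I_m -> R)
  (beta : 'I_n -> 'I_m -> R) (X0 : 'rV[R]_m) (T : {vspace 'rV[R]_m})
  (Ys : nat -> 'rV[R]_m) : Prop :=
  (forall q : nat, (1 <= q)%N ->
     Cmap alpha beta X0 (Ys q)
       = - \sum_(1 <= p < q) Bmap alpha (Ys p) (Ys (q - p)%N)) /\
  Ys 1%N != 0 /\
  (forall p : nat, (2 <= p)%N -> Ys p \in T).

Definition dim_ker_one (m n : nat) (C : 'rV[R]_m -> 'rV[R]_n) : Prop :=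
  exists v : 'rV[R]_m, v != 0 /\
    forall X : 'rV[R]_m, C X = 0 <-> exists c : R, X = c *: v.

(* Main.v *)
Require Import Defs.
From Stdlib Require Import Reals.
From Coquelicot Require PSeries Series Derive Hierarchy Lim_seq Rbar.
From HB Require Import structures.
From mathcomp Require Import all_boot all_order all_algebra.
From mathcomp Require Import all_classical all_reals all_analysis.
From mathcomp Require Import Rstruct Rstruct_topology.
From mathcomp Require Import ring.
Import Order.TTheory GRing.Theory Num.Theory.
Delimit Scope nat_scope with N.
Local Open Scope classical_set_scope.
Local Open Scope ring_scope.
Set Implicit Arguments. Unset Strict Implicit.

Definition isps (a : nat -> R) (t l : R) :=
  @PSeries.is_pseries Hierarchy.R_AbsRing Hierarchy.R_NormedModule a t l.
Lemma bridge (a : nat -> R) (t : R) :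
  cvgn (series (fun p => a p * t ^+ p)) ->
  isps a t (limn (series (fun p => a p * t ^+ p))).
Proof.
move=> H.
have H1 : series (fun p => a p * t ^+ p) @ \oo --> limn (series (fun p => a p * t ^+ p)) by exact: H.
have H2 := @cvgr_dist_lt _ R^o _ _ _ _ _ H1.
rewrite /isps /PSeries.is_pseries.
apply: (@Series.is_series_ext Hierarchy.R_AbsRing Hierarchy.R_NormedModule (fun k => a k * t ^+ k)).
  move=> k. rewrite /Hierarchy.scal /= /Hierarchy.mult /=.
  by rewrite Hierarchy.pow_n_pow RmultE RpowE mulrC.
apply/Series.is_series_Reals => eps heps.
have he : (0 < eps) by exact/RltP.
case: (H2 _ eps he) => N _ HN.
exists N => n /ssrnat.leP hn.
rewrite RealsE.
have := HN n.+1 (leqW hn). rewrite distrC.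
rewrite /series /= big_mkord => h; apply/RltP.
rewrite ?RminusE ?RabsE sum_f_R0E big_mkord; exact: h.
Qed.
Lemma rad_le (a : nat -> R) (x l : R) :
  isps a x l -> Rbar.Rbar_le (Rbar.Finite (Rbasic_fun.Rabs x)) (PSeries.CV_radius a).
Proof.
move=> H; apply: Rbar.Rbar_not_lt_le => Hlt.
apply: (PSeries.CV_disk_outside a x Hlt).
have := Series.ex_series_lim_0 _ (ex_intro _ l H).
apply: Lim_seq.is_lim_seq_ext => k.
by rewrite /Hierarchy.scal /= /Hierarchy.mult /= Hierarchy.pow_n_pow Rmult_comm.
Qed.

Lemma rad_lt (a : nat -> R) (r : R) :
  (forall t : R, `|t| < r -> exists l, isps a t l) ->
  forall t : R, `|t| < r -> Rbar.Rbar_lt (Rbar.Finite (Rbasic_fun.Rabs t)) (PSeries.CV_radius a).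
Proof.
move=> H t ht.
have h0 : 0 <= `|t| by [].
have hp : 0 <= (`|t| + r) / 2.
  by apply: divr_ge0 => //; rewrite addr_ge0 // (le_trans h0) // ltW // (le_lt_trans h0 ht).
have ht' : `|(`|t| + r) / 2| < r.
  by rewrite ger0_norm // ltr_pdivrMr // mulr2n mulrDr mulr1 ltrD2r.
case: (H _ ht') => l hl.
eapply Rbar.Rbar_lt_le_trans; last exact: (rad_le hl).
rewrite /= !RabsE; apply/RltP.
by rewrite (ger0_norm hp) ltr_pdivlMr // mulr2n mulrDr mulr1 ltrD2l.
Qed.

Lemma ps_zero (h : nat -> R) (r : R) : 0 < r ->
  (forall t : R, `|t| < r -> isps h t 0) -> forall n, h n = 0.
Proof.
move=> r0 H n.
have hrad : Rbar.Rbar_lt (Rbar.Finite 0%R) (PSeries.CV_radius h).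
  have h0 : `|0 : R| < r by rewrite normr0.
  have := @rad_lt h r (fun t ht => ex_intro _ 0 (H t ht)) 0 h0.
  by rewrite Rabs_R0.
have := PSeries.Derive_n_coef h n hrad.
have -> : Derive.Derive_n (PSeries.PSeries h) n 0%R = Derive.Derive_n (fun _ => 0%R) n 0%R.
  apply: Derive.Derive_n_ext_loc.
  have rp : Rdefinitions.Rlt 0 r by exact/RltP.
  exists (RIneq.mkposreal r rp) => y hy.
  apply: PSeries.is_pseries_unique; apply: H.
  move: hy; rewrite /Hierarchy.ball /= /Hierarchy.AbsRing_ball /Hierarchy.abs /= /Hierarchy.minus /= /Hierarchy.plus /= /Hierarchy.opp /=.
  by rewrite Ropp_0 Rplus_0_r RabsE => /RltP.
have -> : Derive.Derive_n (fun _ => 0%R) n 0%R = 0%R.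
  by case: n => [|n] //; rewrite Derive.Derive_n_const.
move=> /esym /Rmult_integral [] // /INR_fact_neq_0 [].
Qed.

Lemma isps_ext (a b : nat -> R) t l : (forall n, a n = b n) -> isps a t l -> isps b t l.
Proof. move=> H; exact: (@PSeries.is_pseries_ext Hierarchy.R_AbsRing Hierarchy.R_NormedModule a b t l H). Qed.

Lemma isps_plus (a b : nat -> R) t la lb : isps a t la -> isps b t lb ->
  isps (fun n => a n + b n) t (la + lb).
Proof. move=> ha hb; exact: (PSeries.is_pseries_plus _ _ _ _ _ ha hb). Qed.

Lemma isps_scal (c : R) (a : nat -> R) t l : isps a t l ->
  isps (fun n => c * a n) t (c * l).
Proof. move=> ha.
have := (@PSeries.is_pseries_scal Hierarchy.R_AbsRing Hierarchy.R_NormedModule c a t l (Rmult_comm _ _) ha).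
by apply: isps_ext. Qed.

Lemma isps_mul (a b : nat -> R) t la lb : isps a t la -> isps b t lb ->
  Rbar.Rbar_lt (Rbar.Finite (Rbasic_fun.Rabs t)) (PSeries.CV_radius a) ->
  Rbar.Rbar_lt (Rbar.Finite (Rbasic_fun.Rabs t)) (PSeries.CV_radius b) ->
  isps (fun q => \sum_(p < q.+1) a p * b (q - p)%N) t (la * lb).
Proof.
move=> ha hb ra rb; have := PSeries.is_pseries_mult _ _ _ _ _ ha hb ra rb.
apply: isps_ext => q; rewrite /PSeries.PS_mult sum_f_R0E big_mkord.
by apply: eq_bigr => i _; rewrite RmultE.
Qed.

Lemma isps_const (c : R) t : isps (fun q => if q == 0%N then c else 0) t c.
Proof.
rewrite /isps /PSeries.is_pseries.
apply: (@Series.is_series_ext Hierarchy.R_AbsRing Hierarchy.R_NormedModule (fun q => if q == 0%N then c else 0)).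
  case=> [|k] /=; rewrite /Hierarchy.scal /= /Hierarchy.mult /= ?/Hierarchy.one /=.
    by rewrite Rmult_1_l.
  by rewrite Rmult_0_r.
apply/Series.is_series_Reals => eps heps; exists 0%N => n _.
rewrite sum_f_R0E big_nat_recl // big1 ?addr0 /=; last by [].
rewrite /Rfunctions.Rdist Rminus_diag Rabs_R0. exact: heps.
Qed.

Lemma isps_sum (I : Type) (s : seq I) (f : I -> nat -> R) (g : I -> R) t :
  (forall i, isps (f i) t (g i)) ->
  isps (fun q => \sum_(i <- s) f i q) t (\sum_(i <- s) g i).
Proof.
move=> H; elim: s => [|x s IH].
  rewrite big_nil. eapply isps_ext; last exact: (@isps_const 0 t). move=> q.
  by rewrite big_nil; case: (q == 0%N).
rewrite big_cons; apply: (isps_ext _ (isps_plus (H x) IH)) => q.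
by rewrite big_cons.
Qed.

Lemma coefEq (m n : nat) (alpha : 'I_n -> 'I_m -> 'I_m -> R) (beta : 'I_n -> 'I_m -> R)
  (gamma : 'I_n -> R) (X0 : 'rV[R]_m) (Xs : nat -> 'rV[R]_m) :
  analytic_family alpha beta gamma X0 Xs ->
  forall (k : 'I_n) (q : nat), (0 < q)%N ->
  \sum_(i < m) \sum_(j < m) alpha k i j *
      (\sum_(p < q.+1) Xs p ord0 i * Xs (q - p)%N ord0 j)
  + \sum_(i < m) beta k i * Xs q ord0 i = 0.
Proof.
case=> _ [r [r0 Hr]] k q q0.
pose a i p := Xs p ord0 i.
have Hc t (ht : `|t| < r) i : isps (a i) t (psum Xs t ord0 i).
  by rewrite mxE; apply: bridge; case: (Hr t ht) => /(_ i).
have Hrad i t (ht : `|t| < r) :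
    Rbar.Rbar_lt (Rbar.Finite (Rbasic_fun.Rabs t)) (PSeries.CV_radius (a i)).
  by apply: (@rad_lt _ r) => // t' ht'; exists (psum Xs t' ord0 i); apply: Hc.
pose h q := \sum_(i < m) \sum_(j < m) alpha k i j *
      (\sum_(p < q.+1) a i p * a j (q - p)%N)
  + \sum_(i < m) beta k i * a i q + (if q == 0%N then gamma k else 0).
have Hh t : `|t| < r -> isps h t 0.
  move=> ht.
  have := congr1 (fun M : 'rV[R]_n => M ord0 k) (Hr t ht).2.
  rewrite /Fmap !mxE => E.
  suff HH : isps h t (\sum_(i < m) \sum_(j < m) alpha k i j * psum Xs t ord0 i * psum Xs t ord0 j +
     \sum_(i < m) beta k i * psum Xs t ord0 i + gamma k) by exact: (eq_ind _ (fun x => isps h t x) HH _ E).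
  apply: isps_plus; last exact: isps_const.
  apply: isps_plus; last first.
    by apply: isps_sum => i; apply: isps_scal; apply: Hc.
  have -> : \sum_(i < m) \sum_(j < m) alpha k i j * psum Xs t ord0 i * psum Xs t ord0 j
     = \sum_(i < m) \sum_(j < m) alpha k i j * (psum Xs t ord0 i * psum Xs t ord0 j).
    by apply: eq_bigr => i _; apply: eq_bigr => j _; rewrite mulrA.
  apply: isps_sum => i; apply: isps_sum => j; apply: isps_scal.
  by apply: isps_mul; [apply: Hc|apply: Hc|apply: Hrad|apply: Hrad].
have := ps_zero r0 Hh q.
by case: q q0 => // q _; rewrite /h /= addr0.
Qed.

Lemma BmapDl m n (al : 'I_n -> 'I_m -> 'I_m -> R) (a : R) X Y Z :
  Bmap al (a *: X + Y) Z = a *: Bmap al X Z + Bmap al Y Z.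
Proof.
apply/rowP => k; rewrite !mxE mulr_sumr -big_split /=; apply: eq_bigr => i _.
rewrite mulr_sumr -big_split /=; apply: eq_bigr => j _; rewrite !mxE; ring.
Qed.
Lemma BmapDr m n (al : 'I_n -> 'I_m -> 'I_m -> R) (a : R) X Y Z :
  Bmap al Z (a *: X + Y) = a *: Bmap al Z X + Bmap al Z Y.
Proof.
apply/rowP => k; rewrite !mxE mulr_sumr -big_split /=; apply: eq_bigr => i _.
rewrite mulr_sumr -big_split /=; apply: eq_bigr => j _; rewrite !mxE; ring.
Qed.
Lemma Bmap0l m n (al : 'I_n -> 'I_m -> 'I_m -> R) Y : Bmap al 0 Y = 0.
Proof. by apply/rowP => k; rewrite !mxE big1 // => i _; rewrite big1 // => j _; rewrite mxE mulr0 mul0r. Qed.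
Lemma Bmap0r m n (al : 'I_n -> 'I_m -> 'I_m -> R) Y : Bmap al Y 0 = 0.
Proof. by apply/rowP => k; rewrite !mxE big1 // => i _; rewrite big1 // => j _; rewrite mxE !mulr0. Qed.
Lemma AmapD m n (be : 'I_n -> 'I_m -> R) (a : R) X Y :
  Amap be (a *: X + Y) = a *: Amap be X + Amap be Y.
Proof.
apply/rowP => k; rewrite !mxE mulr_sumr -big_split /=; apply: eq_bigr => i _.
rewrite !mxE; ring.
Qed.
Lemma CmapD m n al be (X0 : 'rV[R]_m) (a : R) X Y :
  Cmap al be X0 (a *: X + Y) = a *: Cmap al be X0 X + Cmap (n:=n) al be X0 Y.
Proof.
rewrite /Cmap BmapDl BmapDr AmapD.
by apply/rowP => k; rewrite !mxE; ring.
Qed.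
Lemma CmapZ m n al be (X0 : 'rV[R]_m) (a : R) X :
  Cmap al be X0 (a *: X) = a *: Cmap (n:=n) al be X0 X.
Proof.
have C0 : Cmap al be X0 0 = 0 :> 'rV[R]_n.
  rewrite /Cmap Bmap0l Bmap0r; apply/rowP => k; rewrite !mxE big1 ?addr0 // => i _.
  by rewrite mxE mulr0.
by rewrite -[a *: X]addr0 CmapD C0 addr0.
Qed.
Lemma CmapB m n al be (X0 : 'rV[R]_m) X Y :
  Cmap al be X0 (X - Y) = Cmap (n:=n) al be X0 X - Cmap al be X0 Y.
Proof.
rewrite addrC -scaleN1r CmapD; apply/rowP => k; rewrite !mxE; ring.
Qed.

Definition cv m (X : 'I_m -> {poly R}) (j : nat) : 'rV[R]_m := \row_i (X i)`_j.
Definition Bp m n (al : 'I_n -> 'I_m -> 'I_m -> R) (X Y : 'I_m -> {poly R}) : 'I_n -> {poly R} :=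
  fun k => \sum_(i < m) \sum_(j < m) al k i j *: (X i * Y j).
Definition Ap m n (be : 'I_n -> 'I_m -> R) (X : 'I_m -> {poly R}) : 'I_n -> {poly R} :=
  fun k => \sum_(i < m) be k i *: X i.
Definition cstp m (X0 : 'rV[R]_m) : 'I_m -> {poly R} := fun i => (X0 ord0 i)%:P.
Definition Qp m n (al : 'I_n -> 'I_m -> 'I_m -> R) (be : 'I_n -> 'I_m -> R) X0
   (X : 'I_m -> {poly R}) : 'I_n -> {poly R} :=
  fun k => Bp al (cstp X0) X k + Bp al X (cstp X0) k + Ap be X k + Bp al X X k.
Definition compv m (X : 'I_m -> {poly R}) (z : {poly R}) : 'I_m -> {poly R} :=
  fun i => X i \Po z.

Lemma cv_Bp m n (al : 'I_n -> 'I_m -> 'I_m -> R) X Y q :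
  cv (Bp al X Y) q = \sum_(p < q.+1) Bmap al (cv X p) (cv Y (q - p)%N).
Proof.
apply/rowP => k; rewrite !mxE summxE coef_sum.
under eq_bigr => i _ do rewrite coef_sum.
under [RHS]eq_bigr => p _ do rewrite mxE.
rewrite [RHS]exchange_big /=; apply: eq_bigr => i _.
rewrite [RHS]exchange_big /=; apply: eq_bigr => j _.
rewrite coefZ coefM mulr_sumr; apply: eq_bigr => p _.
by rewrite !mxE mulrA.
Qed.

Lemma cv_Ap m n (be : 'I_n -> 'I_m -> R) X q :
  cv (Ap be X) q = Amap be (cv X q).
Proof.
apply/rowP => k; rewrite !mxE coef_sum; apply: eq_bigr => i _.
by rewrite coefZ mxE.
Qed.

Lemma cv_cst m (X0 : 'rV[R]_m) p : cv (cstp X0) p = if p == 0%N then X0 else 0.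
Proof. by apply/rowP => i; rewrite !mxE coefC; case: (p == 0%N); rewrite ?mxE. Qed.

Lemma cv_Qp m n (al : 'I_n -> 'I_m -> 'I_m -> R) be X0 X q :
  cv (Qp al be X0 X) q = Cmap al be X0 (cv X q)
     + \sum_(p < q.+1) Bmap al (cv X p) (cv X (q - p)%N).
Proof.
have -> : cv (Qp al be X0 X) q = cv (Bp al (cstp X0) X) q + cv (Bp al X (cstp X0)) q
   + cv (Ap be X) q + cv (Bp al X X) q.
  by apply/rowP => k; rewrite !mxE !coefD.
rewrite cv_Ap !cv_Bp /Cmap; congr (_ + _ + _ + _).
  rewrite big_ord_recl cv_cst /= subn0 big1 ?addr0 // => i _.
  by rewrite cv_cst /= Bmap0l.
rewrite big_ord_recr /= subnn cv_cst /= big1 ?add0r // => i _.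
by rewrite cv_cst subn_eq0 leqNgt ltn_ord /= Bmap0r.
Qed.

Lemma comp_sum (I : Type) (r : seq I) (F : I -> {poly R}) (z : {poly R}) :
  (\sum_(i <- r) F i) \Po z = \sum_(i <- r) (F i \Po z).
Proof.
elim: r => [|x r IH]; first by rewrite !big_nil comp_poly0.
by rewrite !big_cons comp_polyD IH.
Qed.

Lemma compv_Qp m n (al : 'I_n -> 'I_m -> 'I_m -> R) be X0 X z :
  compv (Qp al be X0 X) z = Qp al be X0 (compv X z).
Proof.
apply: funext => k; rewrite /compv /Qp /Bp /Ap !comp_polyD !comp_sum.
have E1 : forall (U V : 'I_m -> {poly R}),
    \sum_(i < m) ((\sum_(j < m) al k i j *: (U i * V j)) \Po z)
    = \sum_(i < m) \sum_(j < m) al k i j *: ((U i \Po z) * (V j \Po z)).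
  move=> U V; apply: eq_bigr => i _; rewrite comp_sum; apply: eq_bigr => j _.
  by rewrite comp_polyZ comp_polyM.
rewrite !E1; congr (_ + _ + _ + _).
- by apply: eq_bigr => i _; apply: eq_bigr => j _; rewrite /cstp comp_polyC.
- by apply: eq_bigr => i _; apply: eq_bigr => j _; rewrite /cstp comp_polyC.
- by apply: eq_bigr => i _; rewrite comp_polyZ.
Qed.

Lemma drop_low (P : {poly R}) N : (forall i, (i < N)%N -> P`_i = 0) ->
  P = drop_poly N P * 'X^N.
Proof.
move=> H; rewrite -{1}(poly_take_drop N P).
have -> : take_poly N P = 0 by apply/polyP => i; rewrite coef_take_poly coef0; case: ifP => // /H.
by rewrite add0r.
Qed.

Lemma comp_low (P z : {poly R}) N k : (0 < k)%N ->
  (forall i, (i < N)%N -> P`_i = 0) -> (forall i, (i < k)%N -> z`_i = 0) ->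
  (forall j, (j < N * k)%N -> (P \Po z)`_j = 0) /\ (P \Po z)`_(N * k) = P`_N * z`_k ^+ N.
Proof.
move=> k0 HP Hz.
have z0 : z.[0] = 0 by rewrite horner_coef0 Hz.
have E : P \Po z = ((drop_poly N P \Po z) * drop_poly k z ^+ N) * 'X^(N * k).
  rewrite {1}(drop_low HP) comp_polyM comp_Xn_poly -mulrA; congr (_ * _).
  by rewrite {1}(drop_low Hz) exprMn -exprM mulnC.
rewrite E; split => [j hj|]; first by rewrite coefMXn hj.
rewrite coefMXn ltnn subnn coef0M -!horner_coef0 horner_exp horner_comp z0.
by rewrite !horner_coef0 !coef_drop_poly.
Qed.

Lemma Bdiff m n (al : 'I_n -> 'I_m -> 'I_m -> R) Z1 Z2 W1 W2 :
  Bmap al Z1 Z2 - Bmap al W1 W2 = Bmap al (Z1 - W1) Z2 + Bmap al W1 (Z2 - W2).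
Proof.
apply/rowP => k; rewrite !mxE -sumrB -big_split /=; apply: eq_bigr => i _.
rewrite -sumrB -big_split /=; apply: eq_bigr => j _; rewrite !mxE; ring.
Qed.

Lemma Cmap0 m n al be (X0 : 'rV[R]_m) : Cmap (n:=n) al be X0 0 = 0.
Proof. by have := CmapZ al be X0 0 0; rewrite scale0r => ->; rewrite scale0r. Qed.

Lemma diffQ m n (al : 'I_n -> 'I_m -> 'I_m -> R) be X0 Z W j :
  cv (Qp al be X0 Z) j - cv (Qp al be X0 W) j =
  Cmap al be X0 (cv Z j - cv W j) + \sum_(p < j.+1)
    (Bmap al (cv Z p - cv W p) (cv Z (j - p)%N) + Bmap al (cv W p) (cv Z (j - p)%N - cv W (j - p)%N)).
Proof.
rewrite !cv_Qp CmapB opprD addrACA; congr (_ + _).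
by rewrite -sumrB; apply: eq_bigr => p _; rewrite Bdiff.
Qed.

Lemma poly_comp_sum (c : nat -> R) (z : {poly R}) N :
  (\poly_(p < N) c p) \Po z = \sum_(p < N) c p *: z ^+ p.
Proof.
rewrite poly_def comp_sum; apply: eq_bigr => p _.
by rewrite comp_polyZ comp_Xn_poly.
Qed.

Definition Sdef m n (al : 'I_n -> 'I_m -> 'I_m -> R) (Y : nat -> 'rV[R]_m) (q : nat) : 'rV[R]_n :=
  \sum_(p < q.+1) Bmap al (Y p) (Y (q - p)%N).

Lemma key_alg m n (al : 'I_n -> 'I_m -> 'I_m -> R) be (X0 : 'rV[R]_m)
  (T : {vspace 'rV[R]_m}) (v : 'rV[R]_m) (coord : 'rV[R]_m -> R)
  (Zt Yr : nat -> 'rV[R]_m) (N k : nat)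
  (hTC : forall X, X \in T -> Cmap al be X0 X = 0 -> X = 0)
  (hcoord : forall X, X - coord X *: v \in T)
  (Zt0 : Zt 0%N = 0)
  (hE : forall q, (0 < q)%N -> Cmap al be X0 (Zt q) + Sdef al Zt q = 0)
  (k0 : (0 < k)%N) (hk : forall p, (p < k)%N -> Zt p = 0)
  (coord0 : coord 0 = 0) (ck : coord (Zt k) != 0)
  (Yr0 : Yr 0%N = 0) (Yr1 : Yr 1%N = v) (YrT : forall p, (2 <= p)%N -> Yr p \in T)
  (N2 : (2 <= N)%N)
  (H : forall q, (q < N)%N -> Cmap al be X0 (Yr q) + Sdef al Yr q = 0) :
  exists X, X \in T /\ Cmap al be X0 X = - Sdef al Yr N.
Proof.
pose M := (N * k)%N.
have kM : (k <= M)%N by rewrite /M leq_pmull // (leq_trans _ N2).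
pose zeta := \poly_(p < M.+1) coord (Zt p).
pose Zp := fun i : 'I_m => \poly_(p < M.+1) (Zt p ord0 i).
pose Yp := fun i : 'I_m => \poly_(p < N) (Yr p ord0 i).
pose W := compv Yp zeta.
pose D j := cv Zp j - cv W j.
have cvZ p : (p <= M)%N -> cv Zp p = Zt p.
  by move=> hp; apply/rowP => i; rewrite !mxE coef_poly ltnS hp.
have cvY p : cv Yp p = if (p < N)%N then Yr p else 0.
  by apply/rowP => i; rewrite !mxE coef_poly; case: ifP; rewrite ?mxE.
have zc p : (p <= M)%N -> zeta`_p = coord (Zt p).
  by move=> hp; rewrite coef_poly ltnS hp.
have zlow i : (i < k)%N -> zeta`_i = 0.
  by move=> hi; rewrite zc ?hk ?coord0 // ltnW // (leq_trans hi).
have z0 : zeta`_0 = 0 by apply: zlow.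
have cvW j : cv W j = \sum_(p < N) (zeta ^+ p)`_j *: Yr p.
  apply/rowP => i; rewrite !mxE /W /compv /Yp poly_comp_sum coef_sum summxE.
  by apply: eq_bigr => p _; rewrite coefZ !mxE mulrC.
have DT j : (j <= M)%N -> D j \in T.
  move=> hj; rewrite /D cvZ // cvW.
  rewrite -(subnK N2) addn2 big_ord_recl big_ord_recl /= Yr0 Yr1 scaler0 add0r expr1 zc //.
  rewrite opprD addrA; apply: memvB; first exact: hcoord.
  by apply: memv_suml => p _; apply: memvZ; apply: YrT.
have W0 : cv W 0 = 0.
  rewrite cvW big1 // => p _; rewrite -horner_coef0 horner_exp horner_coef0 z0 expr0n.
  by case: (nat_of_ord p) => [|p'] /=; rewrite ?Yr0 ?scaler0 ?scale0r.
have QZ j : (j <= M)%N -> cv (Qp al be X0 Zp) j = 0.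
  move=> hj; rewrite cv_Qp cvZ //.
  have -> : \sum_(p < j.+1) Bmap al (cv Zp p) (cv Zp (j - p)%N) = Sdef al Zt j.
    apply: eq_bigr => p _; rewrite !cvZ //; first by rewrite (leq_trans (leq_subr _ _)).
    by rewrite (leq_trans _ hj) // -ltnS.
  case: j hj => [|j] hj; last exact: hE.
  by rewrite Zt0 Cmap0 /Sdef big_ord1 Zt0 Bmap0l addr0.
have QYlow i : (i < N)%N -> cv (Qp al be X0 Yp) i = 0.
  move=> hi; rewrite cv_Qp cvY hi -[RHS](H i hi); congr (_ + _).
  apply: eq_bigr => p _; rewrite !cvY (leq_ltn_trans (leq_subr _ _) hi).
  by rewrite (leq_ltn_trans _ hi) // -ltnS.
have QYN : cv (Qp al be X0 Yp) N = Sdef al Yr N.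
  rewrite cv_Qp cvY ltnn Cmap0 add0r; apply: eq_bigr => p _.
  rewrite !cvY; case: (ltnP p N) => hp.
    case: (posnP p) => [->|pp]; first by rewrite subn0 ltnn Yr0 !Bmap0l.
    by rewrite ltn_subrL pp (leq_trans _ N2).
  have pN : nat_of_ord p = N by apply/eqP; rewrite eqn_leq hp andbT; exact: (ltn_ord p).
  by rewrite pN subnn (leq_trans _ N2) // Yr0 !Bmap0r.
have QW : (forall j, (j < M)%N -> cv (Qp al be X0 W) j = 0) /\
          cv (Qp al be X0 W) M = (zeta`_k ^+ N) *: Sdef al Yr N.
  have E : Qp al be X0 W = compv (Qp al be X0 Yp) zeta by rewrite compv_Qp.
  have QYc kk i : (i < N)%N -> (Qp al be X0 Yp kk)`_i = 0.
    by move=> hi; have := congr1 (fun V : 'rV[R]_n => V ord0 kk) (QYlow i hi); rewrite !mxE.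
  have CL kk := @comp_low (Qp al be X0 Yp kk) zeta N k k0 (QYc kk) zlow.
  split.
    move=> j hj; apply/rowP => kk; rewrite E !mxE /compv.
    by case: (CL kk) => H1 _; rewrite H1.
  apply/rowP => kk; rewrite E !mxE /compv; case: (CL kk) => _ ->.
  have := congr1 (fun V : 'rV[R]_n => V ord0 kk) QYN; rewrite !mxE => ->.
  by rewrite mulrC.
have Dsum j : (j <= M)%N -> (forall p, (p < j)%N -> D p = 0) ->
   cv (Qp al be X0 Zp) j - cv (Qp al be X0 W) j = Cmap al be X0 (D j).
  move=> hj IH; rewrite diffQ big1 ?addr0 // => p _.
  have hp := ltn_ord p; rewrite ltnS in hp.
  rewrite -/(D p) -/(D (j - p)%N).
  case: (ltnP p j) => hpj.
    rewrite IH // Bmap0l add0r.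
    case: (posnP p) => [->|pp]; first by rewrite W0 Bmap0l.
    by rewrite IH ?Bmap0r // ltn_subrL pp (leq_ltn_trans _ hpj).
  have pj : nat_of_ord p = j by apply/eqP; rewrite eqn_leq hp hpj.
  rewrite pj subnn cvZ // Zt0 Bmap0r add0r.
  case: (posnP j) => [j0|jp]; first by rewrite j0 W0 Bmap0l.
  by rewrite IH ?Bmap0r.
have Dz : forall j, (j < M)%N -> D j = 0.
  elim/ltn_ind => j IH hj.
  apply: hTC; first by apply: DT; exact: ltnW.
  rewrite -Dsum ?(ltnW hj) //; last by move=> p hp; apply: IH => //; exact: ltn_trans hj.
  by rewrite QZ ?(ltnW hj) // QW.1 // subrr.
have hDM := Dsum M (leqnn M) Dz.
rewrite QZ // QW.2 sub0r in hDM.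
have cN : zeta`_k ^+ N != 0 by rewrite expf_neq0 // zc.
exists ((zeta`_k ^+ N)^-1 *: D M); split; first by apply: memvZ; exact: DT.
by rewrite CmapZ -hDM scalerN scalerA mulVf // scale1r.
Qed.

Lemma split_sum n (G : nat -> 'rV[R]_n) q : (0 < q)%N ->
  \sum_(p < q.+1) G p = G 0%N + \sum_(1 <= p < q) G p + G q.
Proof.
move=> q0; rewrite -(big_mkord xpredT) big_ltn // big_nat_recr //= addrA; exact: erefl.
Qed.

Lemma decomp m (T : {vspace 'rV[R]_m}) (v : 'rV[R]_m) : (1 <= m)%N ->
  \dim T = (m - 1)%N -> v \notin T -> forall X, exists c, X - c *: v \in T.
Proof.
move=> m1 hT vT X.
have v0 : v != 0 by apply: contraNneq vT => ->; rewrite mem0v.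
have cap : (T :&: <[v]> = 0)%VS.
  apply/eqP; rewrite -subv0; apply/subvP => x /memv_capP [xT /vlineP [c xc]].
  rewrite memv0; apply/eqP; rewrite xc.
  case: (eqVneq c 0) => [->|c0]; first by rewrite scale0r.
  have : c^-1 *: x \in T by apply: memvZ.
  by rewrite xc scalerA mulVf // scale1r (negbTE vT).
have dimS : \dim (T + <[v]>) = m by rewrite dimv_disjoint_sum // hT dim_vline v0 subnK.
have full : (T + <[v]>)%VS = fullv.
  by apply/eqP; rewrite eqEdim subvf dimvf /dim /= mul1n dimS.
have : X \in (T + <[v]>)%VS by rewrite full memvf.
case/memv_addP => y yT [z /vlineP [c ->] ->].
by exists c; rewrite addrK.
Qed.

Theorem theorem6 (m n : nat) (hm : (1 <= m)%N) (hn : (1 <= n)%N)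
  (alpha : 'I_n -> 'I_m -> 'I_m -> R) (beta : 'I_n -> 'I_m -> R)
  (gamma : 'I_n -> R)
  (halpha : forall k i j, alpha k i j = alpha k j i)
  (X0 : 'rV[R]_m) (hX0 : Fmap alpha beta gamma X0 = 0)
  (hker : dim_ker_one (Cmap alpha beta X0))
  (T : {vspace 'rV[R]_m}) (hT : \dim T = (m - 1)%N)
  (hTker : forall X : 'rV[R]_m, X \in T -> Cmap alpha beta X0 X = 0 -> X = 0)
  (Xs : nat -> 'rV[R]_m)
  (hXs : analytic_family alpha beta gamma X0 Xs) (hnc : nonconstant Xs) :
  exists Ys : nat -> 'rV[R]_m,
    Ys 0%N = X0 /\ T_standard alpha beta X0 T Ys.
Proof.
set C := Cmap alpha beta X0.
case: hker => v [v0 hv].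
have Cv : C v = 0 by apply/hv; exists 1; rewrite scale1r.
have vT : v \notin T by apply: contra v0 => vT; apply/eqP; apply: hTker.
have uniq c : c *: v \in T -> c = 0.
  move=> cT; have := hTker _ cT.
  rewrite /C in Cv; rewrite CmapZ Cv scaler0 => /(_ erefl) /eqP.
  by rewrite scaler_eq0 (negbTE v0) orbF => /eqP.
have dec := decomp hm hT vT.
pose coord X := projT1 (cid (dec X)).
have hcoord X : X - coord X *: v \in T by rewrite /coord; case: (cid (dec X)).
have coord0 : coord 0 = 0.
  by apply: uniq; rewrite -memvN -[- _]add0r; exact: hcoord.
pose Zt p := if p == 0%N then 0 else Xs p.
have Zt0 : Zt 0%N = 0 by [].
have hE q : (0 < q)%N -> C (Zt q) + Sdef alpha Zt q = 0.
  move=> q0.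
  have ZtE p : (0 < p)%N -> Zt p = Xs p by rewrite /Zt; case: p.
  have -> : C (Zt q) + Sdef alpha Zt q =
      Amap beta (Xs q) + \sum_(p < q.+1) Bmap alpha (Xs p) (Xs (q - p)%N).
    rewrite /C /Cmap /Sdef (split_sum (fun p => Bmap alpha (Zt p) (Zt (q - p)%N))) //.
    rewrite (split_sum (fun p => Bmap alpha (Xs p) (Xs (q - p)%N))) //= subn0 subnn Zt0 Bmap0l Bmap0r addr0 add0r.
    rewrite hXs.1 ZtE //.
    have -> : \sum_(1 <= p < q) Bmap alpha (Zt p) (Zt (q - p)%N) =
              \sum_(1 <= p < q) Bmap alpha (Xs p) (Xs (q - p)%N).
      apply: eq_big_nat => p /andP [p1 pq].
      by rewrite !ZtE // subn_gt0.
    set S := \sum_(_ <= _ < _) _.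
    set b1 := Bmap alpha X0 (Xs q). set b2 := Bmap alpha (Xs q) X0. set a := Amap beta (Xs q).
    by rewrite [RHS]addrC (addrAC b1 S b2) (addrAC (b1 + b2) S a).
  apply/rowP => kk; have E := coefEq hXs kk q0; rewrite !mxE summxE -[in RHS]E.
  rewrite addrC; congr (_ + _).
  under eq_bigr => p _ do rewrite /Bmap mxE.
  rewrite exchange_big /=; apply: eq_bigr => i _.
  rewrite exchange_big /=; apply: eq_bigr => j _.
  rewrite mulr_sumr; apply: eq_bigr => p _.
  by rewrite mulrA.
have exk : exists p, (0 < p)%N && (Zt p != 0).
  by case: hnc => p [p1 hp]; exists p; rewrite p1 /Zt; case: p p1 hp.
case: (ex_minnP exk) => k /andP [k0 hk0] kmin.
have hk p : (p < k)%N -> Zt p = 0.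
  move=> hp; case: (posnP p) => [->//|p0].
  apply/eqP; apply: contraTT hp => hp; rewrite -leqNgt; apply: kmin.
  by rewrite p0.
have CZk : C (Zt k) = 0.
  have := hE k k0; rewrite /Sdef big1 ?addr0 // => p _.
  case: (posnP p) => [->|p0]; first by rewrite Zt0 Bmap0l.
  by rewrite (hk (k - p)%N) ?Bmap0r // ltn_subrL p0.
have ck : coord (Zt k) != 0.
  case/hv: CZk => c Zc.
  have := hcoord (Zt k); rewrite {1}Zc -scalerBl => /uniq /eqP; rewrite subr_eq0 => /eqP <-.
  by apply: contraNneq hk0 => c0; rewrite Zc c0 scale0r.
pose Cinv (w : 'rV[R]_n) : 'rV[R]_m :=
  match pselect (exists X, X \in T /\ C X = w) with
  | left e => projT1 (cid e) | right _ => 0 end.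
have CinvT w : Cinv w \in T.
  rewrite /Cinv; case: pselect => [e|_]; last exact: mem0v.
  by case: (cid e) => X [].
have CinvP w X : X \in T -> C X = w -> C (Cinv w) = w.
  move=> XT CX; rewrite /Cinv; case: pselect => [e|ne]; last by exfalso; apply: ne; exists X.
  by case: (cid e) => Y [].
pose step (f : nat -> 'rV[R]_m) (q : nat) : 'rV[R]_m :=
  if q == 0%N then 0 else if q == 1%N then v else Cinv (- Sdef alpha f q).
pose tab := fix tab (q : nat) : nat -> 'rV[R]_m :=
  match q with 0%N => fun _ => 0 | q'.+1 => fun p => if p == q' then step (tab q') q' else tab q' p end.
pose Yr p := tab p.+1 p.
have YrE q : Yr q = step (tab q) q by rewrite /Yr /= eqxx.
have tabE q p : tab q p = if (p < q)%N then Yr p else 0.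
  elim: q => [|q IH] //=.
  case: (eqVneq p q) => [->|pq]; first by rewrite ltnSn YrE.
  by rewrite IH ltnS [(p <= q)%N]leq_eqVlt (negbTE pq).
have Yr0 : Yr 0%N = 0 by rewrite YrE.
have Yr1 : Yr 1%N = v by rewrite YrE.
have Stab q : (0 < q)%N -> Sdef alpha (tab q) q = Sdef alpha Yr q.
  move=> q0; apply: eq_bigr => p _; rewrite !tabE.
  have hp := ltn_ord p; rewrite ltnS in hp.
  case: (ltnP p q) => hpq.
    case: (posnP p) => [->|p0]; first by rewrite subn0 ltnn Yr0 !Bmap0l.
    by rewrite ltn_subrL p0 q0.
  have pq : nat_of_ord p = q by apply/eqP; rewrite eqn_leq hp hpq.
  by rewrite pq subnn q0 Yr0 !Bmap0r.
have YrS q : (2 <= q)%N -> Yr q = Cinv (- Sdef alpha Yr q).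
  move=> q2; rewrite YrE /step -Stab ?(leq_trans _ q2) //.
  by case: q q2 => [|[|q]].
have YrT p : (2 <= p)%N -> Yr p \in T by move=> p2; rewrite YrS.
have HY : forall q, C (Yr q) + Sdef alpha Yr q = 0.
  elim/ltn_ind => q IH.
  case: q IH => [|[|q]] IH.
  - by rewrite Yr0 /C Cmap0 /Sdef big_ord1 Yr0 Bmap0l addr0.
  - rewrite Yr1 Cv add0r /Sdef big_ord_recl big_ord1 /= Yr0 Bmap0l Bmap0r.
    by rewrite add0r.
  have [X [XT CX]] := key_alg hTker hcoord Zt0 hE k0 hk coord0 ck Yr0 Yr1 YrT (isT : (2 <= q.+2)%N) IH.
  by rewrite YrS // (CinvP _ X XT CX) addNr.
exists (fun p => if p == 0%N then X0 else Yr p); split => //.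
split; last split.
- move=> q q1; rewrite (negbTE (lt0n_neq0 q1)).
  apply/eqP; rewrite -subr_eq0 opprK; apply/eqP; rewrite -[RHS](HY q).
  congr (_ + _); rewrite /Sdef (split_sum (fun p => Bmap alpha (Yr p) (Yr (q - p)%N))) //.
  rewrite subn0 subnn Yr0 Bmap0l Bmap0r add0r addr0.
  apply: eq_big_nat => p /andP [p1 pq].
  have p0 : (p == 0%N) = false by case: p p1 pq.
  have qp : ((q - p)%N == 0%N) = false by rewrite subn_eq0 leqNgt pq.
  by rewrite p0 qp.
- by rewrite /= Yr1.
- move=> p p2; have p0 : (p == 0%N) = false by case: p p2.
  by rewrite p0; apply: YrT.
Qed.
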